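(* Let $F$, $G$ and $\Pi$ be as in the context. If $S\subset\Sigma_A\times I$ is an attracting (resp. repelling) strip with respect to $G$ and $B$ is its maximal attractor (resp. maximal repeller), then $\Pi(B)$ is the maximal attractor (resp. maximal repeller) of the bi-strip $\Pi(S)$, which is attracting (resp. repelling) with respect to $F$.
   Context: $I=[0,1]$, $R(x)=1-x$. $F(\xi,p)=(\sigma(\xi),f_{\xi_0}(p))$ on $\Sigma_N\times I$, $\Sigma_N=\{1,\ldots,N\}^{\mathbb Z}$, with $f_i$ $C^1$-diffeomorphisms onto their images. $\mathcal I_P$ / $\mathcal I_R$: indices of orientation preserving / reversing $f_i$. $A=(a_{ij})_{i,j=1}^{2N}$ with $a_{ij}=1$ if ($i\in\mathcal I_P$, $j\le N$), or ($i\in\mathcal I_R$, $j>N$), or ($i-N\in\mathcal I_P$, $j>N$), or ($i-N\in\mathcal I_R$, $j\le N$), else $0$; $\Sigma_A$ the $A$-admissible sequences in $\{1,\ldots,2N\}^{\mathbb Z}$ with shift $\sigma_A$; $\pi(\omega)_n=\overline{\omega_n}$ ($\overline i=i$ for $i\le N$, $\overline i=i-N$ otherwise). $G(\omega,x)=(\sigma_A(\omega),g_{\omega_0}(x))$ with $g_i=f_i$, $g_{i+N}=R\circ f_i\circ R$ ($i\in\mathcal I_P$), $g_i=R\circ f_i$, $g_{i+N}=f_i\circ R$ ($i\in\mathcal I_R$). $C=\{\omega\colon\omega_0\le N\}$; $\Pi(\omega,x)=(\pi(\omega),x)$ if $\omega\in C$, $(\pi(\omega),R(x))$ otherwise. Strips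 $S_{\varphi,\psi}=\{(\omega,x)\colon\varphi(\omega)\le x\le\psi(\omega)\}$ for $\varphi<\psi$ pointwise; bi-strip = union of two strips. For a step skew-product $H$, a (bi-)strip $S$ is attracting if $H(S)\subset\operatorname{int}S$, repelling if $H^{-1}$ is defined on $S$ and $H^{-1}(S)\subset\operatorname{int}S$. The maximal attractor of an attracting $S$ is $\bigcap_{n\ge0}H^n(S)$; the maximal repeller of a repelling $S$ is $\bigcap_{n\ge0}H^{-n}(S)$ (maximal attractor for $H^{-1}$). *)

(* Defs.v *)
From Stdlib Require Import Reals ZArith Lra Lia ClassicalEpsilon.
Open Scope R_scope.

Definition inI (x : R) : Prop := 0 <= x <= 1.
Definition refl (x : R) : R := 1 - x.

Definition deriv_within (D : R -> Prop) (g : R -> R) (x d : R) : Prop :=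
  forall eps, 0 < eps -> exists delta, 0 < delta /\
    forall y, D y -> y <> x -> Rabs (y - x) < delta ->
      Rabs ((g y - g x) / (y - x) - d) < eps.

Definition cont_within (D : R -> Prop) (h : R -> R) : Prop :=
  forall x, D x -> forall eps, 0 < eps -> exists delta, 0 < delta /\
    forall y, D y -> Rabs (y - x) < delta -> Rabs (h y - h x) < eps.

Definition C1_on (D : R -> Prop) (g : R -> R) : Prop :=
  exists d : R -> R, (forall x, D x -> deriv_within D g x (d x)) /\ cont_within D d.

Definition imageI (g : R -> R) : R -> Prop := fun y => exists x, inI x /\ g x = y.

Definition C1_diffeo_onto_image (g : R -> R) : Prop :=
  C1_on inI g /\
  (forall x y, inI x -> inI y -> g x = g y -> x = y) /\
  exists h : R -> R, (forall x, inI x -> h (g x) = x) /\ C1_on (imageI g) h.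

Definition orient_pres (g : R -> R) : Prop :=
  forall x y, inI x -> inI y -> x < y -> g x < g y.
Definition orient_rev (g : R -> R) : Prop :=
  forall x y, inI x -> inI y -> x < y -> g y < g x.

Definition seqZ := Z -> nat.
Definition shift (w : seqZ) : seqZ := fun n => w (n + 1)%Z.

Definition SigmaN (N : nat) (xi : seqZ) : Prop := forall n, ((1 <= xi n)%nat /\ (xi n <= N)%nat).

(* entries a_ij = 1 of the 2N x 2N matrix A (indices 1..2N) *)
Definition amat (N : nat) (f : nat -> R -> R) (i j : nat) : Prop :=
  (((1 <= i)%nat /\ (i <= N)%nat) /\ orient_pres (f i) /\ (j <= N)%nat) \/
  (((1 <= i)%nat /\ (i <= N)%nat) /\ orient_rev (f i) /\ (N < j)%nat) \/
  ((N < i)%nat /\ ((1 <= i - N)%nat /\ (i - N <= N)%nat) /\ orient_pres (f (i - N)%nat) /\ (N < j)%nat) \/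
  ((N < i)%nat /\ ((1 <= i - N)%nat /\ (i - N <= N)%nat) /\ orient_rev (f (i - N)%nat) /\ (j <= N)%nat).

Definition SigmaA (N : nat) (f : nat -> R -> R) (w : seqZ) : Prop :=
  forall n, ((1 <= w n)%nat /\ (w n <= 2 * N)%nat) /\ amat N f (w n) (w (n + 1)%Z).

Definition bar (N i : nat) : nat := if (i <=? N)%nat then i else (i - N)%nat.
Definition proj (N : nat) (w : seqZ) : seqZ := fun n => bar N (w n).

Definition gmap (N : nat) (f : nat -> R -> R) (i : nat) : R -> R :=
  if (i <=? N)%nat then
    (if excluded_middle_informative (orient_pres (f i)) then f i
     else fun x => refl (f i x))
  else
    (if excluded_middle_informative (orient_pres (f (i - N)%nat))
     then fun x => refl (f (i - N)%nat (refl x))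
     else fun x => f (i - N)%nat (refl x)).

Definition pt := (seqZ * R)%type.

Definition Fmap (f : nat -> R -> R) (z : pt) : pt :=
  (shift (fst z), f (fst z 0%Z) (snd z)).

Definition Gmap (N : nat) (f : nat -> R -> R) (z : pt) : pt :=
  (shift (fst z), gmap N f (fst z 0%Z) (snd z)).

Definition Pimap (N : nat) (z : pt) : pt :=
  if (fst z 0%Z <=? N)%nat then (proj N (fst z), snd z)
  else (proj N (fst z), refl (snd z)).

Definition pset := pt -> Prop.
Definition seteq (A B : pset) : Prop := forall z, A z <-> B z.
Definition img (H : pt -> pt) (A : pset) : pset := fun z => exists w, A w /\ H w = z.

Definition space (Sig : seqZ -> Prop) : pset := fun z => Sig (fst z) /\ inI (snd z).

Definition strip_fun (Sig : seqZ -> Prop) (phi psi : seqZ -> R) : Prop :=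
  forall w, Sig w -> 0 <= phi w /\ phi w < psi w /\ psi w <= 1.

Definition strip (Sig : seqZ -> Prop) (phi psi : seqZ -> R) : pset :=
  fun z => Sig (fst z) /\ phi (fst z) <= snd z <= psi (fst z).

(* interior in Sig x I (product topology; cylinders x intervals form a basis) *)
Definition interior_in (Sig : seqZ -> Prop) (S : pset) : pset :=
  fun z => S z /\ exists (k : nat) (eps : R), 0 < eps /\
    forall w' x', Sig w' -> inI x' ->
      (forall n, (- Z.of_nat k <= n <= Z.of_nat k)%Z -> w' n = fst z n) ->
      Rabs (x' - snd z) < eps -> S (w', x').

Definition attracting (Sig : seqZ -> Prop) (H : pt -> pt) (S : pset) : Prop :=
  forall z, img H S z -> interior_in Sig S z.

Definition repelling (Sig : seqZ -> Prop) (H : pt -> pt) (S : pset) : Prop :=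
  (forall s, S s -> exists z, space Sig z /\ H z = s) /\
  (forall z, space Sig z -> S (H z) -> interior_in Sig S z).

Definition max_attractor (H : pt -> pt) (S : pset) : pset :=
  fun z => forall n : nat, exists w, S w /\ Nat.iter n H w = z.

Definition max_repeller (H : pt -> pt) (S : pset) : pset :=
  fun z => forall n : nat, S (Nat.iter n H z).

Definition standing (N : nat) (f : nat -> R -> R) : Prop :=
  forall i, ((1 <= i)%nat /\ (i <= N)%nat) ->
    (forall x, inI x -> inI (f i x)) /\ C1_diffeo_onto_image (f i).

Definition is_bistrip (N : nat) (T : pset) : Prop :=
  exists phi1 psi1 phi2 psi2,
    strip_fun (SigmaN N) phi1 psi1 /\ strip_fun (SigmaN N) phi2 psi2 /\
    seteq T (fun z => strip (SigmaN N) phi1 psi1 z \/ strip (SigmaN N) phi2 psi2 z).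

(* Main.v *)
Require Import Defs.
From Stdlib Require Import Reals ZArith.
From Stdlib Require Import Lra Lia ClassicalEpsilon FunctionalExtensionality Bool Classical.
Open Scope R_scope.

Lemma C1_cont (g : R -> R) : C1_on inI g -> forall x, inI x -> forall eps, 0 < eps ->
  exists delta, 0 < delta /\ forall y, inI y -> Rabs (y - x) < delta -> Rabs (g y - g x) < eps.
Proof.
  intros [d [Hd _]] x Hx eps Heps.
  destruct (Hd x Hx 1 Rlt_0_1) as [d1 [Hd1 H1]].
  set (M := Rabs (d x) + 1).
  assert (HM : 0 < M) by (unfold M; pose proof (Rabs_pos (d x)); lra).
  exists (Rmin d1 (eps / M)). split.
  { apply Rmin_glb_lt; [lra| apply Rdiv_lt_0_compat; lra]. }
  intros y Hy Hyx.
  destruct (Req_dec y x) as [->|Hne].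
  { replace (g x - g x) with 0 by ring. rewrite Rabs_R0. lra. }
  assert (Hlt1 : Rabs (y - x) < d1) by (eapply Rlt_le_trans; [apply Hyx| apply Rmin_l]).
  assert (Hlt2 : Rabs (y - x) < eps / M) by (eapply Rlt_le_trans; [apply Hyx| apply Rmin_r]).
  specialize (H1 y Hy Hne Hlt1).
  set (q := (g y - g x) / (y - x)) in *.
  assert (Hq : Rabs q < M).
  { unfold M. pose proof (Rabs_triang (q - d x) (d x)).
    replace (q - d x + d x) with q in H by ring. lra. }
  assert (Hyx0 : y - x <> 0) by lra.
  replace (g y - g x) with (q * (y - x)) by (unfold q; field; auto).
  rewrite Rabs_mult.
  assert (Hp : 0 < Rabs (y - x)) by (apply Rabs_pos_lt; auto).
  assert (Rabs q * Rabs (y - x) <= M * Rabs (y - x)).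
  { apply Rmult_le_compat_r; lra. }
  assert (M * Rabs (y - x) < M * (eps / M)) by (apply Rmult_lt_compat_l; lra).
  replace (M * (eps / M)) with eps in H0 by (field; lra). lra.
Qed.

Definition clamp (t : R) : R := Rmax 0 (Rmin 1 t).

Lemma clamp_I t : 0 <= clamp t <= 1.
Proof. unfold clamp, Rmax, Rmin; repeat destruct Rle_dec; lra. Qed.

Lemma clamp_lip t s : Rabs (clamp t - clamp s) <= Rabs (t - s).
Proof.
  unfold clamp, Rmax, Rmin; repeat destruct Rle_dec; unfold Rabs; repeat destruct Rcase_abs; lra.
Qed.

Lemma clamp0 : clamp 0 = 0.
Proof. unfold clamp, Rmax, Rmin; repeat destruct Rle_dec; lra. Qed.
Lemma clamp1 : clamp 1 = 1.
Proof. unfold clamp, Rmax, Rmin; repeat destruct Rle_dec; lra. Qed.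

Lemma cont_of (h : R -> R) :
  (forall t0 eps, 0 < eps -> exists delta, 0 < delta /\ forall t, Rabs (t - t0) < delta -> Rabs (h t - h t0) < eps) ->
  continuity h.
Proof.
  intros H t0. unfold continuity_pt, continue_in, limit1_in, limit_in. simpl. unfold R_dist.
  intros eps Heps. destruct (H t0 eps Heps) as [d [Hd Hd']]. exists d. split; auto.
  intros x [_ Hx]. apply Hd'; auto.
Qed.


Lemma lip_part (g : R -> R) (gC : C1_on inI g) (a b : R) (Ha : inI a) (Hb : inI b) :
  forall t0 eps, 0 < eps -> exists delta, 0 < delta /\ forall t,
   Rabs (t - t0) < delta -> Rabs (g (a + clamp t * (b - a)) - g (a + clamp t0 * (b - a))) < eps.
Proof.
  intros t0 eps Heps.
  assert (HI : forall t, inI (a + clamp t * (b - a))).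
  { intros t; pose proof (clamp_I t); unfold inI in *; split; nra. }
  destruct (C1_cont g gC _ (HI t0) eps Heps) as [d [Hd H]].
  exists d; split; auto. intros t Ht. apply H; auto.
  replace (a + clamp t * (b - a) - (a + clamp t0 * (b - a))) with ((clamp t - clamp t0) * (b - a)) by ring.
  rewrite Rabs_mult. pose proof (clamp_lip t t0).
  assert (Rabs (b - a) <= 1) by (unfold inI in *; unfold Rabs; destruct Rcase_abs; lra).
  pose proof (Rabs_pos (clamp t - clamp t0)). pose proof (Rabs_pos (b-a)). nra.
Qed.

Lemma sign_keep (g : R -> R) (gC : C1_on inI g) (ginj : forall x y, inI x -> inI y -> g x = g y -> x = y) (x y : R) : inI x -> inI y -> x < y ->
  ~ (0 < g 1 - g 0 /\ g y - g x < 0).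
Proof.
  intros Hx Hy Hxy [H0 H1].
  set (h := fun t => g (0 + clamp t * (x - 0)) - g (1 + clamp t * (y - 1))).
  assert (Hc : continuity h).
  { apply cont_of. intros t0 eps Heps.
    assert (I0 : inI 0) by (unfold inI; lra). assert (I1 : inI 1) by (unfold inI; lra).
    destruct (lip_part g gC 0 x I0 Hx t0 (eps/2)) as [d1 [Hd1 E1]]; [lra|].
    destruct (lip_part g gC 1 y I1 Hy t0 (eps/2)) as [d2 [Hd2 E2]]; [lra|].
    exists (Rmin d1 d2); split; [apply Rmin_glb_lt; auto|].
    intros t Ht.
    assert (Rabs (t - t0) < d1) by (eapply Rlt_le_trans; [apply Ht| apply Rmin_l]).
    assert (Rabs (t - t0) < d2) by (eapply Rlt_le_trans; [apply Ht| apply Rmin_r]).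
    specialize (E1 t H). specialize (E2 t H2). unfold h.
    eapply Rle_lt_trans; [| assert (Rabs (g (0 + clamp t * (x - 0)) - g (0 + clamp t0 * (x - 0))) + Rabs (g (1 + clamp t * (y - 1)) - g (1 + clamp t0 * (y - 1))) < eps) by lra; exact H3].
    rewrite <- (Rabs_Ropp (g (1 + clamp t * (y - 1)) - g (1 + clamp t0 * (y - 1)))).
    eapply Rle_trans; [| apply Rabs_triang]. right. f_equal. ring. }
  assert (h 0 < 0).
  { unfold h. rewrite clamp0. replace (0 + 0 * (x - 0)) with 0 by ring.
    replace (1 + 0 * (y - 1)) with 1 by ring. lra. }
  assert (0 < h 1).
  { unfold h. rewrite clamp1. replace (0 + 1 * (x - 0)) with x by ring.
    replace (1 + 1 * (y - 1)) with y by ring. lra. }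
  destruct (IVT h 0 1 Hc Rlt_0_1 H H2) as [z [Hz Hz0]].
  unfold h in Hz0. pose proof (clamp_I z). set (c := clamp z) in *.
  assert (inI (0 + c * (x - 0))) by (unfold inI in *; split; nra).
  assert (inI (1 + c * (y - 1))) by (unfold inI in *; split; nra).
  assert (E : 0 + c * (x - 0) = 1 + c * (y - 1)) by (apply ginj; auto; lra).
  unfold inI in *. nra.
Qed.

Lemma sign_keep' (g : R -> R) (gC : C1_on inI g) (ginj : forall x y, inI x -> inI y -> g x = g y -> x = y) (x y : R) : inI x -> inI y -> x < y ->
  ~ (g 1 - g 0 < 0 /\ 0 < g y - g x).
Proof.
  intros Hx Hy Hxy [H0 H1].
  set (h := fun t => g (1 + clamp t * (y - 1)) - g (0 + clamp t * (x - 0))).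
  assert (Hc : continuity h).
  { apply cont_of. intros t0 eps Heps.
    assert (I0 : inI 0) by (unfold inI; lra). assert (I1 : inI 1) by (unfold inI; lra).
    destruct (lip_part g gC 0 x I0 Hx t0 (eps/2)) as [d1 [Hd1 E1]]; [lra|].
    destruct (lip_part g gC 1 y I1 Hy t0 (eps/2)) as [d2 [Hd2 E2]]; [lra|].
    exists (Rmin d1 d2); split; [apply Rmin_glb_lt; auto|].
    intros t Ht.
    assert (Rabs (t - t0) < d1) by (eapply Rlt_le_trans; [apply Ht| apply Rmin_l]).
    assert (Rabs (t - t0) < d2) by (eapply Rlt_le_trans; [apply Ht| apply Rmin_r]).
    specialize (E1 t H). specialize (E2 t H2). unfold h.
    eapply Rle_lt_trans; [| assert (Rabs (g (1 + clamp t * (y - 1)) - g (1 + clamp t0 * (y - 1))) + Rabs (g (0 + clamp t * (x - 0)) - g (0 + clamp t0 * (x - 0))) < eps) by lra; exact H3].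
    rewrite <- (Rabs_Ropp (g (0 + clamp t * (x - 0)) - g (0 + clamp t0 * (x - 0)))).
    eapply Rle_trans; [| apply Rabs_triang]. right. f_equal. ring. }
  assert (h 0 < 0).
  { unfold h. rewrite clamp0. replace (0 + 0 * (x - 0)) with 0 by ring.
    replace (1 + 0 * (y - 1)) with 1 by ring. lra. }
  assert (0 < h 1).
  { unfold h. rewrite clamp1. replace (0 + 1 * (x - 0)) with x by ring.
    replace (1 + 1 * (y - 1)) with y by ring. lra. }
  destruct (IVT h 0 1 Hc Rlt_0_1 H H2) as [z [Hz Hz0]].
  unfold h in Hz0. pose proof (clamp_I z). set (c := clamp z) in *.
  assert (inI (0 + c * (x - 0))) by (unfold inI in *; split; nra).
  assert (inI (1 + c * (y - 1))) by (unfold inI in *; split; nra).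
  assert (E : 0 + c * (x - 0) = 1 + c * (y - 1)) by (apply ginj; auto; lra).
  unfold inI in *. nra.
Qed.

Lemma mono (g : R -> R) (gC : C1_on inI g) (ginj : forall x y, inI x -> inI y -> g x = g y -> x = y) : orient_pres g \/ orient_rev g.
Proof.
  assert (I0 : inI 0) by (unfold inI; lra). assert (I1 : inI 1) by (unfold inI; lra).
  destruct (Rtotal_order (g 0) (g 1)) as [H|[H|H]].
  - left. intros x y Hx Hy Hxy.
    destruct (Rtotal_order (g x) (g y)) as [H'|[H'|H']]; auto.
    + apply ginj in H'; auto; lra.
    + exfalso. apply (sign_keep g gC ginj x y); auto; lra.
  - apply ginj in H; auto; lra.
  - right. intros x y Hx Hy Hxy.
    destruct (Rtotal_order (g x) (g y)) as [H'|[H'|H']]; auto.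
    + exfalso. apply (sign_keep' g gC ginj x y); auto; lra.
    + apply ginj in H'; auto; lra.
Qed.

Definition lay (N i : nat) : bool := negb (i <=? N)%nat.
Definition flipb (f : nat -> R -> R) (i : nat) : bool :=
  if excluded_middle_informative (orient_pres (f i)) then false else true.
Fixpoint fwd (c : Z -> bool) (m : nat) : bool :=
  match m with O => false | S m => xorb (fwd c m) (c (Z.of_nat m)) end.
Fixpoint bwd (c : Z -> bool) (m : nat) : bool :=
  match m with O => false | S m => xorb (bwd c m) (c (- Z.of_nat (S m))%Z) end.
Definition Lay (c : Z -> bool) (u : bool) (n : Z) : bool :=
  xorb u (if (0 <=? n)%Z then fwd c (Z.to_nat n) else bwd c (Z.to_nat (- n))).
Definition cseq (f : nat -> R -> R) (xi : seqZ) : Z -> bool := fun k => flipb f (xi k).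
Definition lift N f (xi : seqZ) (u : bool) : seqZ :=
  fun n => (xi n + (if Lay (cseq f xi) u n then N else 0))%nat.

Lemma Lay_step c u n : Lay c u (n + 1) = xorb (Lay c u n) (c n).
Proof.
  unfold Lay. destruct (Z.leb_spec 0 n).
  - destruct (Z.leb_spec 0 (n+1)); [|lia].
    replace (Z.to_nat (n+1)) with (S (Z.to_nat n)) by lia. simpl.
    rewrite Z2Nat.id by lia. destruct u, (fwd c (Z.to_nat n)), (c n); reflexivity.
  - destruct (Z.eq_dec n (-1)) as [->|Hn].
    + simpl. destruct u, (c (-1)%Z); reflexivity.
    + destruct (Z.leb_spec 0 (n+1)); [lia|].
      replace (Z.to_nat (- n)) with (S (Z.to_nat (- (n+1)))) by lia. simpl.
      match goal with |- context [c ?t] => replace t with n by lia end.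
      destruct u, (bwd c (Z.to_nat (- (n + 1)))), (c n); reflexivity.
Qed.

Lemma Lay0 c u : Lay c u 0%Z = u.
Proof. unfold Lay. simpl. apply xorb_false_r. Qed.

Lemma Lay_true c n : Lay c true n = negb (Lay c false n).
Proof. unfold Lay. destruct (0 <=? n)%Z; simpl; reflexivity. Qed.

Lemma Lay_agree (k : nat) c c' u :
  (forall m, (- Z.of_nat k <= m <= Z.of_nat k)%Z -> c m = c' m) ->
  forall n, (- Z.of_nat k <= n <= Z.of_nat k)%Z -> Lay c u n = Lay c' u n.
Proof.
  intros H n Hn.
  assert (Hf : forall m, (m <= k)%nat -> fwd c m = fwd c' m).
  { induction m; intros; simpl; auto. rewrite IHm by lia. rewrite H by lia. reflexivity. }
  assert (Hb : forall m, (m <= k)%nat -> bwd c m = bwd c' m).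
  { induction m; intros; simpl; auto. rewrite IHm by lia. rewrite H by lia. reflexivity. }
  unfold Lay. destruct (Z.leb_spec 0 n).
  - rewrite Hf by lia. reflexivity.
  - rewrite Hb by lia. reflexivity.
Qed.

Lemma rev_not_pres g : orient_rev g -> ~ orient_pres g.
Proof.
  intros Hr Hp. assert (I0 : inI 0) by (unfold inI; lra). assert (I1 : inI 1) by (unfold inI; lra).
  specialize (Hr 0 1 I0 I1 Rlt_0_1). specialize (Hp 0 1 I0 I1 Rlt_0_1). lra.
Qed.

Lemma flip_pres f i : orient_pres (f i) -> flipb f i = false.
Proof. unfold flipb; intros; destruct excluded_middle_informative; tauto. Qed.
Lemma flip_rev f i : orient_rev (f i) -> flipb f i = true.
Proof. unfold flipb; intros H; destruct excluded_middle_informative; auto.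
  exfalso; eapply rev_not_pres; eauto. Qed.

Lemma mono_i N f i : standing N f -> (1 <= i <= N)%nat -> orient_pres (f i) \/ orient_rev (f i).
Proof.
  intros Hs Hi. destruct (Hs i Hi) as [_ [HC [Hinj _]]]. apply mono; auto.
Qed.

Lemma lay_add N x (b : bool) : (1 <= x <= N)%nat -> lay N (x + (if b then N else 0)) = b.
Proof. intros. unfold lay. destruct b; [destruct (Nat.leb_spec (x + N) N)|destruct (Nat.leb_spec (x + 0) N)]; simpl; lia. Qed.
Lemma bar_add N x (b : bool) : (1 <= x <= N)%nat -> bar N (x + (if b then N else 0)) = x.
Proof. intros. unfold bar. destruct b; [destruct (Nat.leb_spec (x + N) N)|destruct (Nat.leb_spec (x + 0) N)]; lia. Qed.

Lemma lift_SigmaA N f xi u : standing N f -> SigmaN N xi -> SigmaA N f (lift N f xi u).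
Proof.
  intros Hs Hxi n. unfold lift. rewrite Lay_step.
  replace (cseq f xi n) with (flipb f (xi n)) by reflexivity.
  pose proof (Hxi n) as Hn. pose proof (Hxi (n+1)%Z) as Hn1.
  set (L := Lay (cseq f xi) u n).
  split. { destruct L; simpl; lia. }
  unfold amat.
  destruct (mono_i N f (xi n) Hs Hn) as [Hp|Hr].
  - rewrite (flip_pres _ _ Hp). rewrite xorb_false_r. destruct L.
    + right; right; left. replace (xi n + N - N)%nat with (xi n) by lia. split; [lia|]. split; [lia|]. split; auto. lia.
    + left. replace (xi n + 0)%nat with (xi n) by lia. split; [lia|]. split; auto. lia.
  - rewrite (flip_rev _ _ Hr). destruct L; simpl.
    + right; right; right. replace (xi n + N - N)%nat with (xi n) by lia. split; [lia|]. split; [lia|]. split; auto. lia.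
    + right; left. replace (xi n + 0)%nat with (xi n) by lia. split; [lia|]. split; auto. lia.
Qed.

Lemma lay_rec N f w n : SigmaA N f w ->
  lay N (w (n + 1)%Z) = xorb (lay N (w n)) (flipb f (bar N (w n))).
Proof.
  intros H. destruct (H n) as [Hr Ha]. unfold amat in Ha. unfold lay, bar.
  destruct Ha as [[Hi [Hp Hj]]|[[Hi [Hp Hj]]|[[Hi [Hi' [Hp Hj]]]|[Hi [Hi' [Hp Hj]]]]]].
  - destruct (Nat.leb_spec (w n) N); [|lia]. rewrite (flip_pres _ _ Hp).
    destruct (Nat.leb_spec (w (n+1)%Z) N); [|lia]. reflexivity.
  - destruct (Nat.leb_spec (w n) N); [|lia]. rewrite (flip_rev _ _ Hp).
    destruct (Nat.leb_spec (w (n+1)%Z) N); [lia|]. reflexivity.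
  - destruct (Nat.leb_spec (w n) N); [lia|]. rewrite (flip_pres _ _ Hp).
    destruct (Nat.leb_spec (w (n+1)%Z) N); [lia|]. reflexivity.
  - destruct (Nat.leb_spec (w n) N); [lia|]. rewrite (flip_rev _ _ Hp).
    destruct (Nat.leb_spec (w (n+1)%Z) N); [|lia]. reflexivity.
Qed.

Lemma lift_eta N f w : SigmaA N f w -> w = lift N f (proj N w) (lay N (w 0%Z)).
Proof.
  intros H.
  assert (HL : forall n, lay N (w n) = Lay (cseq f (proj N w)) (lay N (w 0%Z)) n).
  { apply Z.peano_ind.
    - rewrite Lay0. reflexivity.
    - intros x IH. rewrite <- Z.add_1_r. rewrite (lay_rec N f w x H). rewrite Lay_step. rewrite IH. reflexivity.
    - intros x IH. rewrite <- Z.sub_1_r in *.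
      pose proof (lay_rec N f w (x - 1) H) as E. pose proof (Lay_step (cseq f (proj N w)) (lay N (w 0%Z)) (x-1)) as E2.
      replace (x - 1 + 1)%Z with x in E, E2 by lia. rewrite IH in E. rewrite E2 in E.
      unfold cseq, proj in E.
      destruct (lay N (w (x-1)%Z)), (Lay _ _ (x-1)%Z), (flipb f (bar N (w (x-1)%Z))); simpl in *; congruence. }
  apply functional_extensionality. intros n. unfold lift. rewrite <- HL.
  destruct (H n) as [[H1 H2] _]. unfold proj, lay, bar.
  destruct (Nat.leb_spec (w n) N); simpl; lia.
Qed.

Lemma proj_lift N f xi u : SigmaN N xi -> proj N (lift N f xi u) = xi.
Proof.
  intros H. apply functional_extensionality. intros n. unfold proj, lift. apply bar_add. apply H.
Qed.

Lemma Pimap_lift N f xi u y : SigmaN N xi ->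
  Pimap N (lift N f xi u, y) = (xi, if u then refl y else y).
Proof.
  intros H. unfold Pimap. simpl. rewrite proj_lift by auto.
  unfold lift. rewrite Lay0. pose proof (H 0%Z).
  destruct u; [destruct (Nat.leb_spec (xi 0%Z + N) N)|destruct (Nat.leb_spec (xi 0%Z + 0) N)]; try lia; reflexivity.
Qed.

Lemma lay_lift N f xi u n : SigmaN N xi -> lay N (lift N f xi u n) = Lay (cseq f xi) u n.
Proof. intros H. unfold lift. apply lay_add. apply H. Qed.

Lemma semiconj N f b : SigmaA N f (fst b) -> Pimap N (Gmap N f b) = Fmap f (Pimap N b).
Proof.
  destruct b as [w x]; simpl. intros H. destruct (H 0%Z) as [_ Ha]. unfold amat in Ha.
  unfold Pimap, Gmap, Fmap, gmap, Defs.shift; simpl. change (0+1)%Z with 1%Z in *.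
  destruct Ha as [[Hi [Hp Hj]]|[[Hi [Hp Hj]]|[[Hi [Hi' [Hp Hj]]]|[Hi [Hi' [Hp Hj]]]]]].
  - destruct (Nat.leb_spec (w 0%Z) N); [|lia].
    destruct (Nat.leb_spec (w 1%Z) N); [|lia].
    destruct excluded_middle_informative; [|tauto].
    simpl; f_equal. unfold proj, bar. destruct (Nat.leb_spec (w 0%Z) N); [|lia]. reflexivity.
  - destruct (Nat.leb_spec (w 0%Z) N); [|lia].
    destruct (Nat.leb_spec (w 1%Z) N); [lia|].
    destruct excluded_middle_informative as [Hp'|]; [exfalso; eapply rev_not_pres; eauto|].
    simpl; f_equal. unfold proj, bar. destruct (Nat.leb_spec (w 0%Z) N); [|lia]. unfold refl; ring.
  - destruct (Nat.leb_spec (w 0%Z) N); [lia|].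
    destruct (Nat.leb_spec (w 1%Z) N); [lia|].
    destruct excluded_middle_informative; [|tauto].
    simpl; f_equal. unfold proj, bar. destruct (Nat.leb_spec (w 0%Z) N); [lia|]. unfold refl; ring.
  - destruct (Nat.leb_spec (w 0%Z) N); [lia|].
    destruct (Nat.leb_spec (w 1%Z) N); [|lia].
    destruct excluded_middle_informative as [Hp'|]; [exfalso; eapply rev_not_pres; eauto|].
    simpl; f_equal. unfold proj, bar. destruct (Nat.leb_spec (w 0%Z) N); [lia|]. reflexivity.
Qed.

Lemma SA_shift N f w : SigmaA N f w -> SigmaA N f (Defs.shift w).
Proof. intros H n. exact (H (n+1)%Z). Qed.

Lemma SA_SN N f w : SigmaA N f w -> SigmaN N (proj N w).
Proof.
  intros H n. destruct (H n) as [[H1 H2] _]. unfold proj, bar.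
  destruct (Nat.leb_spec (w n) N); lia.
Qed.

Lemma refl_I x : inI x -> inI (refl x).
Proof. unfold inI, refl; lra. Qed.

Lemma G_space N f b : standing N f -> space (SigmaA N f) b -> space (SigmaA N f) (Gmap N f b).
Proof.
  intros Hs [Hw Hx]. destruct b as [w x]; simpl in *. split; simpl.
  - apply SA_shift; auto.
  - destruct (Hw 0%Z) as [[H1 H2] _]. unfold gmap.
    destruct (Nat.leb_spec (w 0%Z) N).
    + destruct (Hs (w 0%Z)) as [HI _]; [lia|].
      destruct excluded_middle_informative; auto. apply refl_I; auto.
    + destruct (Hs (w 0%Z - N)%nat) as [HI _]; [lia|].
      destruct excluded_middle_informative; auto using refl_I.
Qed.

Lemma Pi_space N f b : space (SigmaA N f) b -> space (SigmaN N) (Pimap N b).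
Proof.
  intros [Hw Hx]. destruct b as [w x]; simpl in *. unfold Pimap; simpl.
  destruct (w 0%Z <=? N)%nat; split; simpl; auto using refl_I; eapply SA_SN; eauto.
Qed.

Lemma Pi_fst N b : fst (Pimap N b) = proj N (fst b).
Proof. unfold Pimap. destruct (_ <=? _)%nat; reflexivity. Qed.

Lemma iter_fst N f n b k : fst (Nat.iter n (Gmap N f) b) k = fst b (k + Z.of_nat n)%Z.
Proof.
  revert k. induction n; intros k; simpl.
  - f_equal; lia.
  - unfold Defs.shift. rewrite IHn. f_equal; lia.
Qed.

Lemma iter_SA N f n b : SigmaA N f (fst b) -> SigmaA N f (fst (Nat.iter n (Gmap N f) b)).
Proof. induction n; simpl; auto. intros H. apply SA_shift; auto. Qed.

Lemma iter_space N f n b : standing N f -> space (SigmaA N f) b -> space (SigmaA N f) (Nat.iter n (Gmap N f) b).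
Proof. induction n; simpl; auto. intros Hs H. apply G_space; auto. Qed.

Lemma iter_semiconj N f n b : SigmaA N f (fst b) ->
  Pimap N (Nat.iter n (Gmap N f) b) = Nat.iter n (Fmap f) (Pimap N b).
Proof.
  induction n; simpl; auto. intros H. rewrite semiconj by (apply iter_SA; auto).
  rewrite IHn; auto.
Qed.

Lemma Pi_inj_layer N f b b' : SigmaA N f (fst b) -> SigmaA N f (fst b') ->
  Pimap N b = Pimap N b' -> lay N (fst b 0%Z) = lay N (fst b' 0%Z) -> b = b'.
Proof.
  destruct b as [w x], b' as [w' x']; simpl. intros H H' E L.
  assert (Hp : proj N w = proj N w').
  { pose proof (f_equal fst E) as E1. rewrite !Pi_fst in E1. exact E1. }
  assert (Hw : w = w').
  { rewrite (lift_eta N f w H), (lift_eta N f w' H'). rewrite Hp, L. reflexivity. }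
  subst w'. f_equal. unfold Pimap in E. simpl in E. unfold lay in L.
  destruct (w 0%Z <=? N)%nat; inversion E; auto. unfold refl in *; lra.
Qed.

Definition bp N f (z : pt) : pt := (lift N f (fst z) false, snd z).
Definition bm N f (z : pt) : pt := (lift N f (fst z) true, refl (snd z)).

Lemma Pi_bp N f z : SigmaN N (fst z) -> Pimap N (bp N f z) = z.
Proof. intros H. unfold bp. rewrite Pimap_lift; auto. destruct z; reflexivity. Qed.
Lemma Pi_bm N f z : SigmaN N (fst z) -> Pimap N (bm N f z) = z.
Proof. intros H. unfold bm. rewrite Pimap_lift; auto. destruct z; simpl. f_equal. unfold refl; ring. Qed.

Lemma fiber N f b z : SigmaA N f (fst b) -> SigmaN N (fst z) -> standing N f ->
  Pimap N b = z -> b = bp N f z \/ b = bm N f z.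
Proof.
  intros Hb Hz Hs E.
  destruct (lay N (fst b 0%Z)) eqn:L.
  - right. apply Pi_inj_layer with N f; auto.
    + unfold bm; simpl. apply lift_SigmaA; auto.
    + rewrite Pi_bm; auto.
    + rewrite L. unfold bm; simpl. rewrite lay_lift, Lay0; auto.
  - left. apply Pi_inj_layer with N f; auto.
    + unfold bp; simpl. apply lift_SigmaA; auto.
    + rewrite Pi_bp; auto.
    + rewrite L. unfold bp; simpl. rewrite lay_lift, Lay0; auto.
Qed.

Lemma lay_iter N f n xi u y : SigmaN N xi ->
  lay N (fst (Nat.iter n (Gmap N f) (lift N f xi u, y)) 0%Z) = Lay (cseq f xi) u (Z.of_nat n).
Proof. intros H. rewrite iter_fst. simpl. rewrite lay_lift; auto. Qed.

Lemma interior_transfer N f (S : pset) b : standing N f -> SigmaA N f (fst b) ->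
  interior_in (SigmaA N f) S b -> interior_in (SigmaN N) (img (Pimap N) S) (Pimap N b).
Proof.
  intros Hs Hb [Sb [k [eps [He H]]]]. split; [exists b; auto|].
  exists k, eps. split; auto. intros w' x' Hw' Hx' Hag Habs.
  destruct b as [w x]. simpl in Hb.
  set (u := lay N (w 0%Z)).
  assert (Heta : w = lift N f (proj N w) u) by (apply lift_eta; auto).
  set (x'' := if u then refl x' else x').
  exists (lift N f w' u, x''). split.
  - apply H.
    + apply lift_SigmaA; auto.
    + unfold x''; destruct u; auto using refl_I.
    + intros n Hn. simpl. transitivity (lift N f (proj N w) u n); [| rewrite <- Heta; reflexivity].
      unfold lift. rewrite Pi_fst in Hag. change (fst (w, x)) with w in Hag. rewrite (Hag n Hn).
      f_equal. erewrite Lay_agree; [reflexivity| |exact Hn].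
      intros m Hm. unfold cseq. rewrite (Hag m Hm). reflexivity.
    + simpl. unfold x''. unfold Pimap in Habs. simpl in Habs. unfold u, lay.
      destruct (w 0%Z <=? N)%nat; simpl in *; auto.
      unfold refl in *. replace (1 - x' - x) with (- (x' - (1 - x))) by ring.
      rewrite Rabs_Ropp; auto.
  - rewrite Pimap_lift; auto. unfold x''. destruct u; auto. f_equal. unfold refl; ring.
Qed.

Lemma bistrip_lem N f phi psi : standing N f -> strip_fun (SigmaA N f) phi psi ->
  is_bistrip N (img (Pimap N) (strip (SigmaA N f) phi psi)).
Proof.
  intros Hs hS.
  exists (fun xi => phi (lift N f xi false)), (fun xi => psi (lift N f xi false)),
         (fun xi => 1 - psi (lift N f xi true)), (fun xi => 1 - phi (lift N f xi true)).
  split; [|split].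
  - intros xi Hxi. apply hS. apply lift_SigmaA; auto.
  - intros xi Hxi. destruct (hS (lift N f xi true)) as [A [B C]]; [apply lift_SigmaA; auto|]. lra.
  - intros z. split.
    + intros [[w x] [[Hw Hx] E]]. simpl in Hw, Hx.
      pose proof (lift_eta N f w Hw) as Heta. subst z. unfold Pimap, strip; simpl.
      unfold lay in Heta. destruct (w 0%Z <=? N)%nat; simpl in Heta; rewrite Heta in Hx; simpl.
      * left. split; [eapply SA_SN; eauto| exact Hx].
      * right. split; [eapply SA_SN; eauto|]. unfold refl. lra.
    + intros [[Hz Hy]|[Hz Hy]].
      * exists (bp N f z). split.
        -- unfold bp, strip; simpl. split; auto. apply lift_SigmaA; auto.
        -- apply Pi_bp; auto.
      * exists (bm N f z). split.
        -- unfold bm, strip; simpl. split; [apply lift_SigmaA; auto|]. unfold refl; lra.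
        -- apply Pi_bm; auto.
Qed.

Theorem lemma3p10 (N : nat) (f : nat -> R -> R) (hf : standing N f)
  (phi psi : seqZ -> R) (hS : strip_fun (SigmaA N f) phi psi) :
  let S := strip (SigmaA N f) phi psi in
  (attracting (SigmaA N f) (Gmap N f) S ->
     is_bistrip N (img (Pimap N) S) /\
     attracting (SigmaN N) (Fmap f) (img (Pimap N) S) /\
     seteq (img (Pimap N) (max_attractor (Gmap N f) S))
           (max_attractor (Fmap f) (img (Pimap N) S))) /\
  (repelling (SigmaA N f) (Gmap N f) S ->
     is_bistrip N (img (Pimap N) S) /\
     repelling (SigmaN N) (Fmap f) (img (Pimap N) S) /\
     seteq (img (Pimap N) (max_repeller (Gmap N f) S))
           (max_repeller (Fmap f) (img (Pimap N) S))).
Proof.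
  intros S.
  assert (SS : forall b, S b -> space (SigmaA N f) b).
  { intros [w x] [Hw Hx]. simpl in *. destruct (hS w Hw). split; simpl; auto. unfold inI; lra. }
  split.
  - intros Hat. split; [apply bistrip_lem; auto|]. split.
    + intros z [p [[b [Sb E1]] E2]]. subst p z.
      rewrite <- semiconj by (apply SS; auto).
      apply (interior_transfer N f); auto.
      * apply (G_space N f b hf (SS b Sb)).
      * apply Hat. exists b; auto.
    + assert (GS : forall n b, (exists w, S w /\ Nat.iter (Datatypes.S n) (Gmap N f) w = b) ->
                               (exists w, S w /\ Nat.iter n (Gmap N f) w = b)).
      { intros n b [w [Sw E]]. exists (Gmap N f w). split.
        - apply Hat. exists w; auto.
        - rewrite <- E. clear. induction n; simpl; auto. rewrite IHn; auto. }
      assert (GSm : forall m n b, (n <= m)%nat -> (exists w, S w /\ Nat.iter m (Gmap N f) w = b) ->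
                               (exists w, S w /\ Nat.iter n (Gmap N f) w = b)).
      { intros m n b Hnm. induction Hnm; auto. }
      intros z. split.
      * intros [b [Hb E]] n. subst z. destruct (Hb n) as [w [Sw E]]. subst b.
        exists (Pimap N w). split; [exists w; auto|].
        symmetry. apply iter_semiconj. apply SS; auto.
      * intros Hz.
        destruct (Hz 0%nat) as [p [[b0 [Sb0 E0]] Ez]]. simpl in Ez. subst p.
        assert (Hzs : space (SigmaN N) z) by (subst z; apply (Pi_space N f); auto).
        destruct Hzs as [HzN HzI].
        assert (Hall : forall n, (exists w, S w /\ Nat.iter n (Gmap N f) w = bp N f z) \/
                                 (exists w, S w /\ Nat.iter n (Gmap N f) w = bm N f z)).
        { intros n. destruct (Hz n) as [p [[b [Sb Eb]] En]]. subst p.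
          rewrite <- iter_semiconj in En by (apply SS; auto).
          destruct (fiber N f _ z (iter_SA N f n b (proj1 (SS b Sb))) HzN hf En) as [E|E].
          - left; exists b; auto.
          - right; exists b; auto. }
        destruct (classic (forall n, exists w, S w /\ Nat.iter n (Gmap N f) w = bp N f z)) as [Hp|Hp].
        -- exists (bp N f z). split; auto. apply Pi_bp; auto.
        -- apply not_all_ex_not in Hp. destruct Hp as [n0 Hn0].
           exists (bm N f z). split; [|apply Pi_bm; auto].
           intros n. destruct (Hall (Nat.max n n0)) as [H|H].
           ++ exfalso. apply Hn0. eapply GSm; [|exact H]. lia.
           ++ eapply GSm; [|exact H]. lia.
  - intros [Hr1 Hr2]. split; [apply bistrip_lem; auto|]. split.
    + split.
      * intros s [w [Sw E]]. subst s. destruct (Hr1 w Sw) as [z [Hz E]]. subst w.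
        exists (Pimap N z). split; [apply (Pi_space N f); auto|].
        symmetry. apply semiconj. apply Hz.
      * intros z [HzN HzI] [w [Sw Ew]].
        assert (Hsp : space (SigmaA N f) (bp N f z)) by (split; [apply lift_SigmaA|]; auto).
        assert (Hsm : space (SigmaA N f) (bm N f z)) by (split; [apply lift_SigmaA|apply refl_I]; auto).
        assert (E1 : Fmap f z = Pimap N (Gmap N f (bp N f z))).
        { rewrite semiconj by apply Hsp. rewrite Pi_bp; auto. }
        assert (E2 : Fmap f z = Pimap N (Gmap N f (bm N f z))).
        { rewrite semiconj by apply Hsm. rewrite Pi_bm; auto. }
        assert (Lp : lay N (fst (Gmap N f (bp N f z)) 0%Z) = Lay (cseq f (fst z)) false 1%Z).
        { apply (lay_iter N f 1 (fst z) false (snd z) HzN). }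
        assert (Lm : lay N (fst (Gmap N f (bm N f z)) 0%Z) = Lay (cseq f (fst z)) true 1%Z).
        { apply (lay_iter N f 1 (fst z) true (refl (snd z)) HzN). }
        rewrite Lay_true in Lm.
        assert (HwA : SigmaA N f (fst w)) by (apply SS; auto).
        destruct (Bool.bool_dec (lay N (fst w 0%Z)) (Lay (cseq f (fst z)) false 1%Z)) as [L|L].
        -- assert (w = Gmap N f (bp N f z)).
           { apply Pi_inj_layer with N f; auto.
             - apply (G_space N f _ hf Hsp).
             - rewrite Ew, <- E1. reflexivity.
             - rewrite Lp; auto. }
           subst w. rewrite <- (Pi_bp N f z HzN). apply (interior_transfer N f); [exact hf | apply Hsp | apply Hr2; auto].
        -- assert (w = Gmap N f (bm N f z)).
           { apply Pi_inj_layer with N f; auto.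
             - apply (G_space N f _ hf Hsm).
             - rewrite Ew, <- E2. reflexivity.
             - rewrite Lm. destruct (lay N (fst w 0%Z)), (Lay _ _ _); simpl in *; congruence. }
           subst w. rewrite <- (Pi_bm N f z HzN). apply (interior_transfer N f); [exact hf | apply Hsm | apply Hr2; auto].
    + assert (Down : forall n b, space (SigmaA N f) b -> S (Nat.iter (Datatypes.S n) (Gmap N f) b) ->
                                 S (Nat.iter n (Gmap N f) b)).
      { intros n b Hb H. apply Hr2 in H; [apply H| apply iter_space; auto]. }
      assert (Downm : forall m n b, (n <= m)%nat -> space (SigmaA N f) b -> S (Nat.iter m (Gmap N f) b) ->
                                 S (Nat.iter n (Gmap N f) b)).
      { intros m n b Hnm Hb. induction Hnm; auto. }
      intros z. split.
      * intros [b [Hb E]] n. subst z. exists (Nat.iter n (Gmap N f) b). split; auto.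
        apply iter_semiconj. apply SS. exact (Hb 0%nat).
      * intros Hz.
        destruct (Hz 0%nat) as [b0 [Sb0 E0]]. simpl in Hz.
        assert (Hzs : space (SigmaN N) z) by (simpl in E0; rewrite <- E0; apply (Pi_space N f); auto).
        destruct Hzs as [HzN HzI].
        assert (Hsp : space (SigmaA N f) (bp N f z)) by (split; [apply lift_SigmaA|]; auto).
        assert (Hsm : space (SigmaA N f) (bm N f z)) by (split; [apply lift_SigmaA|apply refl_I]; auto).
        assert (Hall : forall n, S (Nat.iter n (Gmap N f) (bp N f z)) \/ S (Nat.iter n (Gmap N f) (bm N f z))).
        { intros n. destruct (Hz n) as [w [Sw Ew]].
          assert (E1 : Nat.iter n (Fmap f) z = Pimap N (Nat.iter n (Gmap N f) (bp N f z))).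
          { rewrite iter_semiconj by apply Hsp. rewrite Pi_bp; auto. }
          assert (E2 : Nat.iter n (Fmap f) z = Pimap N (Nat.iter n (Gmap N f) (bm N f z))).
          { rewrite iter_semiconj by apply Hsm. rewrite Pi_bm; auto. }
          assert (Lp := lay_iter N f n (fst z) false (snd z) HzN).
          assert (Lm := lay_iter N f n (fst z) true (refl (snd z)) HzN).
          rewrite Lay_true in Lm.
          assert (HwA : SigmaA N f (fst w)) by (apply SS; auto).
          destruct (Bool.bool_dec (lay N (fst w 0%Z)) (Lay (cseq f (fst z)) false (Z.of_nat n))) as [L|L].
          - left. replace (Nat.iter n (Gmap N f) (bp N f z)) with w; auto.
            apply Pi_inj_layer with N f; auto.
            + apply (iter_SA N f n _ (proj1 Hsp)).
            + rewrite Ew, <- E1. reflexivity.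
            + unfold bp. rewrite Lp; auto.
          - right. replace (Nat.iter n (Gmap N f) (bm N f z)) with w; auto.
            apply Pi_inj_layer with N f; auto.
            + apply (iter_SA N f n _ (proj1 Hsm)).
            + rewrite Ew, <- E2. reflexivity.
            + unfold bm. rewrite Lm. destruct (lay N (fst w 0%Z)), (Lay _ _ _); simpl in *; congruence. }
        destruct (classic (forall n, S (Nat.iter n (Gmap N f) (bp N f z)))) as [Hp|Hp].
        -- exists (bp N f z). split; auto. apply Pi_bp; auto.
        -- apply not_all_ex_not in Hp. destruct Hp as [n0 Hn0].
           exists (bm N f z). split; [|apply Pi_bm; auto].
           intros n. destruct (Hall (Nat.max n n0)) as [H|H].
           ++ exfalso. apply Hn0. eapply Downm; [| |exact H]; auto. lia.
           ++ eapply Downm; [| |exact H]; auto. lia.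
Qed.
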